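(* Let $G$ be a connected finite simple graph on $n$ vertices. Then $\ell(G)=n-\omega(G)+1$ if and only if $G$ is a WL-graph.
   Context: $\ell(G)$ is the length (number of edges) of a longest induced path in $G$; $\omega(G)$ is the clique number of $G$ (maximum size of a set of pairwise adjacent vertices). WL-graph: a graph $G$ is a WL-graph if there exist positive integers $\ell,\omega$ with $\omega\ge2$ such that $G=P\cup K\cup H$ (union of graphs: union of vertex sets and of edge sets), where (i) $P$ is a path graph with consecutive vertices $v_0,v_1,\dots,v_\ell$; (ii) $K$ is a complete graph on the vertex set $\{v_t,v_{t+1},u_1,\dots,u_{\omega-2}\}$ for some $0\le t<\ell$, with $V(P)\cap V(K)=\{v_t,v_{t+1}\}$; (iii) $H$ is a graph with vertex set $V(P)\cup V(K)$ and edge set contained in $\{\{v_i,u_j\}:0\le i\le\ell,\ 1\le j\le\omega-2\}$. *)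

(* Defs.v *)
(* Finite simple graphs as a symmetric irreflexive rel on a finType. *)
From mathcomp Require Import all_boot.
Set Implicit Arguments. Unset Strict Implicit. Unset Printing Implicit Defensive.

Section Graphs.
Variables (T : finType) (e : rel T).

Definition induced_path (s : seq T) : bool :=
  match s with
  | [::] => false
  | x0 :: _ =>
      uniq s &&
      [forall i : 'I_(size s), forall j : 'I_(size s),
          e (nth x0 s i) (nth x0 s j) == ((i.+1 == j :> nat) || (j.+1 == i :> nat))]
  end.

(* ell(G): number of edges of a longest induced path (a path on k+1 vertices
   has length k; such paths have at most #|T| vertices). *)
Definition ell : nat :=
  \max_(k < #|T| | [exists s : k.+1.-tuple T, induced_path s]) k.

Definition clique (A : {set T}) : bool :=
  [forall x in A, forall y in A, (x != y) ==> e x y].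

Definition omega : nat := \max_(A : {set T} | clique A) #|A|.

Definition connected_graph : Prop := forall x y : T, connect e x y.

(* WL-graph, following the definition literally.  Path vertices v 0 .. v l,
   clique-only vertices u 1 .. u (w-2); H is an arbitrary set of edges of the
   form {v_i, u_j}; G = P ∪ K ∪ H. *)
Definition WL_graph : Prop :=
  exists (l w t : nat) (v u : nat -> T) (h : T -> T -> Prop),
    [/\ 0 < l, 2 <= w & t < l] /\
    (forall i j, i <= l -> j <= l -> v i = v j -> i = j) /\
    (forall i j, 1 <= i <= w - 2 -> 1 <= j <= w - 2 -> u i = u j -> i = j) /\
    (* V(P) ∩ V(K) = {v_t, v_{t+1}} *)
    (forall i j, i <= l -> 1 <= j <= w - 2 -> v i <> u j) /\
    (forall x, (exists i, i <= l /\ x = v i) \/ (exists j, 1 <= j <= w - 2 /\ x = u j)) /\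
    (forall x y, h x y -> exists i j, i <= l /\ 1 <= j <= w - 2 /\
                   ((x = v i /\ y = u j) \/ (x = u j /\ y = v i))) /\
    (forall x y, e x y <->
       (exists i, i < l /\ ((x = v i /\ y = v i.+1) \/ (x = v i.+1 /\ y = v i)))
       \/ (x <> y /\
           (x = v t \/ x = v t.+1 \/ exists j, 1 <= j <= w - 2 /\ x = u j) /\
           (y = v t \/ y = v t.+1 \/ exists j, 1 <= j <= w - 2 /\ y = u j))
       \/ h x y \/ h y x).

End Graphs.

(* Main.v *)
Require Import Defs.
From mathcomp Require Import all_boot zify.
Set Implicit Arguments. Unset Strict Implicit. Unset Printing Implicit Defensive.

Section H.
Variables (T : finType) (e : rel T).

Lemma ip_uniq s : induced_path e s -> uniq s.
Proof. by case: s => //= a s /andP[]. Qed.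

Lemma ip_adj s x0 i j : induced_path e s -> i < size s -> j < size s ->
  e (nth x0 s i) (nth x0 s j) = (i.+1 == j) || (j.+1 == i).
Proof.
case: s => //= a s /andP[_ /forallP H] Hi Hj.
have := H (Ordinal Hi) => /forallP /(_ (Ordinal Hj)) /eqP /=.
by rewrite -!(set_nth_default a x0 (s:=a::s)).
Qed.

Lemma clique_e A x y : clique e A -> x \in A -> y \in A -> x != y -> e x y.
Proof. by move=> /forallP H xA yA; move: (H x); rewrite xA => /forallP /(_ y); rewrite yA /= => /implyP. Qed.

Lemma adj3 (i j k : nat) : ((i.+1==j)||(j.+1==i)) -> ((j.+1==k)||(k.+1==j)) ->
  ((i.+1==k)||(k.+1==i)) -> False.
Proof. by case/orP=>/eqP ? ; case/orP=>/eqP ?; case/orP=>/eqP ?; lia. Qed.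

Lemma ip_clique2 s A : induced_path e s -> clique e A -> #|[set x in s] :&: A| <= 2.
Proof.
move=> Hs HA; rewrite leqNgt; apply/negP => /card_gt2P [x [y [z [[hx hy hz] [nxy nyz nzx]]]]].
move: hx hy hz; rewrite !inE => /andP[xs xA] /andP[ys yA] /andP[zs zA].
have ad : forall a b, a \in s -> b \in s -> a \in A -> b \in A -> a != b ->
  ((index a s).+1 == index b s) || ((index b s).+1 == index a s).
  move=> a b aS bS aA bA nab; rewrite -(ip_adj a Hs); last 2 first.
  - by rewrite index_mem. - by rewrite index_mem.
  by rewrite !nth_index //; apply: (@clique_e A).
apply: (@adj3 (index x s) (index y s) (index z s)); apply: ad => //.
by rewrite eq_sym.
Qed.

Lemma ip_card s : induced_path e s -> #|[set x in s]| = size s.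
Proof. by move=> /ip_uniq /card_uniqP <-; rewrite cardsE. Qed.

Lemma count_bound s A : induced_path e s -> clique e A ->
  #|[set x in s] :|: A| + #|[set x in s] :&: A| = size s + #|A| /\
  #|[set x in s] :|: A| <= #|T| /\ #|[set x in s] :&: A| <= 2.
Proof.
move=> Hs HA; split; first by rewrite cardsUI ip_card.
by split; [apply: max_card | apply: ip_clique2].
Qed.

End H.

Section B.
Variables (T : finType) (e : rel T).

Lemma ipath_le s : induced_path e s -> (size s).-1 <= ell e.
Proof.
case: s => // a s Hs /=.
have Hk : size s < #|T|.
  have := ip_uniq Hs => /card_uniqP => /= <-; exact: max_card.
apply: (@leq_bigmax_cond _ _ (fun i : 'I_#|T| => nat_of_ord i) (Ordinal Hk)).
by apply/existsP; exists (in_tuple (a :: s)).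
Qed.

Lemma clique_le A : clique e A -> #|A| <= omega e.
Proof. by move=> HA; apply: (@leq_bigmax_cond _ _ (fun A : {set T} => #|A|) A). Qed.

Lemma ell_omega : ell e + omega e <= #|T| + 1.
Proof.
suff : ell e <= #|T| + 1 - omega e.
  have : omega e <= #|T| by apply/bigmax_leqP => A _; exact: max_card.
  lia.
apply/bigmax_leqP => k /existsP [s Hs].
have := ltn_ord k; suff : omega e <= #|T| + 1 - k by lia.
apply/bigmax_leqP => A HA.
have [H1 [H2 H3]] := count_bound Hs HA.
rewrite size_tuple in H1; lia.
Qed.

Lemma ip_intro s x0 : s != [::] -> uniq s ->
  (forall i j, i < size s -> j < size s ->
     e (nth x0 s i) (nth x0 s j) = ((i.+1 == j) || (j.+1 == i))) -> induced_path e s.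
Proof.
case: s => // a s _ /= Hu H; rewrite Hu /=; apply/forallP => i; apply/forallP => j.
by rewrite !(set_nth_default x0 a) // H.
Qed.

End B.

Section W.
Variables (T : finType) (e : rel T) (l w t : nat) (v u : nat -> T) (h : T -> T -> Prop).
Hypotheses (H0 : 0 < l) (Hw : 2 <= w) (Ht : t < l)
 (Hv : forall i j, i <= l -> j <= l -> v i = v j -> i = j)
 (Hu : forall i j, 1 <= i <= w - 2 -> 1 <= j <= w - 2 -> u i = u j -> i = j)
 (Hvu : forall i j, i <= l -> 1 <= j <= w - 2 -> v i <> u j)
 (Hcov : forall x, (exists i, i <= l /\ x = v i) \/ (exists j, 1 <= j <= w - 2 /\ x = u j))
 (Hh : forall x y, h x y -> exists i j, i <= l /\ 1 <= j <= w - 2 /\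
                   ((x = v i /\ y = u j) \/ (x = u j /\ y = v i)))
 (HE : forall x y, e x y <->
       (exists i, i < l /\ ((x = v i /\ y = v i.+1) \/ (x = v i.+1 /\ y = v i)))
       \/ (x <> y /\
           (x = v t \/ x = v t.+1 \/ exists j, 1 <= j <= w - 2 /\ x = u j) /\
           (y = v t \/ y = v t.+1 \/ exists j, 1 <= j <= w - 2 /\ y = u j))
       \/ h x y \/ h y x).

Lemma vadj i j : i <= l -> j <= l -> e (v i) (v j) = (i.+1 == j) || (j.+1 == i).
Proof.
move=> il jl; apply/idP/idP.
- move/HE => [[k [kl [[H1 H2]|[H1 H2]]]] | [[ne [hx hy]] | [hh|hh]]].
  + have kl1 : k <= l by lia. have kl2 : k.+1 <= l by lia.
    by rewrite (Hv il kl1 H1) (Hv jl kl2 H2) eqxx.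
  + have kl1 : k <= l by lia. have kl2 : k.+1 <= l by lia.
    by rewrite (Hv jl kl1 H2) (Hv il kl2 H1) eqxx orbT.
  + have ei : i = t \/ i = t.+1.
      case: hx => [hx|[hx|[j' [j'w hx]]]].
      * by left; apply: Hv => //; lia.
      * by right; apply: Hv => //; lia.
      * by case: (Hvu il j'w).
    have ej : j = t \/ j = t.+1.
      case: hy => [hy|[hy|[j' [j'w hy]]]].
      * by left; apply: Hv => //; lia.
      * by right; apply: Hv => //; lia.
      * by case: (Hvu jl j'w).
    case: ei => ?; case: ej => ?; subst; rewrite ?eqxx ?orbT //;
      by exfalso; apply: ne.
  + have [i' [j' [i'l [j'w [[_ hy]|[hx _]]]]]] := Hh hh.
    * by case: (Hvu jl j'w).
    * by case: (Hvu il j'w).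
  + have [i' [j' [i'l [j'w [[_ hy]|[hx _]]]]]] := Hh hh.
    * by case: (Hvu il j'w).
    * by case: (Hvu jl j'w).
- case/orP => /eqP E; apply/HE; left.
  + by exists i; split; [lia | left; rewrite E].
  + by exists j; split; [lia | right; rewrite E].
Qed.

Lemma WL_path : induced_path e (map v (iota 0 l.+1)).
Proof.
apply: (@ip_intro _ _ _ (v 0)) => //.
- rewrite map_inj_in_uniq ?iota_uniq // => i j; rewrite !mem_iota /= => a b.
  apply: Hv; lia.
- move=> i j; rewrite size_map size_iota => a b.
  rewrite !(nth_map 0) ?size_iota // !nth_iota //; apply: vadj; lia.
Qed.

Definition fK (i : 'I_w) : T :=
  if i == 0 :> nat then v t else if i == 1 :> nat then v t.+1 else u i.-1.

Lemma fK_in (i : 'I_w) : fK i = v t \/ fK i = v t.+1 \/ exists j, 1 <= j <= w - 2 /\ fK i = u j.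
Proof.
rewrite /fK; case: eqP => h0; first by left.
case: eqP => h1; first by right; left.
right; right; exists i.-1; split => //; have := ltn_ord i; lia.
Qed.


Lemma fK_spec (i : 'I_w) : (i = 0 :> nat /\ fK i = v t) \/ (i = 1 :> nat /\ fK i = v t.+1)
  \/ (fK i = u i.-1 /\ 1 <= i.-1 <= w - 2 /\ 2 <= i).
Proof.
rewrite /fK; case: eqP => h0; first by left.
case: eqP => h1; first by right; left.
right; right; split => //; have := ltn_ord i; lia.
Qed.

Lemma fK_inj : injective fK.
Proof.
have tl : t <= l by lia. have t1l : t.+1 <= l by lia.
move=> i j E; apply: val_inj => /=.
case: (fK_spec i) => [[a b]|[[a b]|[b [c d]]]];
case: (fK_spec j) => [[a' b']|[[a' b']|[b' [c' d']]]]; rewrite b b' in E;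
try lia.
- by have := Hv tl t1l E; lia.
- by case: (Hvu tl c').
- by have := Hv t1l tl E; lia.
- by case: (Hvu t1l c').
- by case: (Hvu tl c (esym E)).
- by case: (Hvu t1l c (esym E)).
- by have := Hu c c' E; lia.
Qed.

Lemma WL_clique : clique e [set fK i | i in 'I_w].
Proof.
apply/forallP => x; apply/implyP => /imsetP [i _ ->].
apply/forallP => y; apply/implyP => /imsetP [j _ ->].
apply/implyP => ne; apply/HE; right; left; split; first by move/eqP: ne.
by split; apply: fK_in.
Qed.

Lemma WL_clique_card : #|[set fK i | i in 'I_w]| = w.
Proof. by rewrite card_imset ?card_ord //; apply: fK_inj. Qed.

Definition gV (k : 'I_(l.+1 + (w - 2))) : T := if k <= l then v k else u (k - l).

Lemma WL_card : #|T| <= l + w - 1.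
Proof.
have : #|[set gV k | k in 'I_(l.+1 + (w - 2))]| <= l.+1 + (w - 2).
  by have := leq_imset_card gV 'I_(l.+1 + (w - 2)); rewrite card_ord.
suff -> : [set gV k | k in 'I_(l.+1 + (w - 2))] = [set: T] by rewrite cardsT; lia.
apply/eqP; rewrite eqEsubset subsetT /=; apply/subsetP => x _.
case: (Hcov x) => [[i [il ->]]|[j [jw ->]]].
- have ik : i < l.+1 + (w - 2) by lia.
  apply/imsetP; exists (Ordinal ik) => //; by rewrite /gV /= il.
- have jk : l + j < l.+1 + (w - 2) by lia.
  apply/imsetP; exists (Ordinal jk) => //; rewrite /gV /=.
  have -> : (l + j <= l) = false by lia.
  by rewrite addKn.
Qed.

Lemma WL_eq : ell e = #|T| - omega e + 1.
Proof.
have h1 := ell_omega e.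
have h2 := ipath_le WL_path; rewrite size_map size_iota /= in h2.
have h3 := clique_le WL_clique; rewrite WL_clique_card in h3.
have h4 := WL_card.
lia.
Qed.

End W.

Lemma lt_pred i n : 0 < n -> i <= n.-1 -> i < n.
Proof. lia. Qed.
Lemma le_pred i n : i < n -> i <= n.-1.
Proof. lia. Qed.
Lemma lt_pred2 i n : i < n.-1 -> i.+1 < n.
Proof. lia. Qed.
Lemma lt_pred3 i n : i < n.-1 -> i < n.
Proof. lia. Qed.

Section C.
Variables (T : finType) (e : rel T) (s : seq T) (A : {set T}) (x y : T).
Hypotheses (esym : symmetric e) (eirr : irreflexive e)
  (Hs : induced_path e s) (HA : clique e A)
  (Hcov : forall z, z \in s \/ z \in A)
  (xs : x \in s) (ys : y \in s) (xA : x \in A) (yA : y \in A) (nxy : x != y)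
  (HI : #|[set z in s] :&: A| = 2) (Hl : 1 < size s).

Definition l := (size s).-1.
Definition w := #|A|.
Definition U := A :\: [set z in s].
Definition r := enum U.
Definition v k := nth x s k.
Definition u j := nth x r j.-1.
Definition ix := index x s.
Definition iy := index y s.
Definition t := minn ix iy.

Lemma sz_r : size r = w - 2.
Proof. by rewrite -cardE /U /w -(cardsID [set z in s] A) setIC HI; lia. Qed.

Lemma w2 : 2 <= w.
Proof. by rewrite /w -HI; apply: subset_leq_card; apply: subsetIr. Qed.

Lemma in_s a : a \in s -> exists i, i <= l /\ a = v i.
Proof.
move=> aS; exists (index a s); split; last by rewrite /v nth_index.
have H : index a s < size s by rewrite index_mem.
by rewrite /l; lia.
Qed.

Lemma in_U a : a \in U -> exists j, 1 <= j <= w - 2 /\ a = u j.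
Proof.
move=> aU; have ar : a \in r by rewrite /r mem_enum.
exists (index a r).+1; split; last by rewrite /u /= nth_index.
have H : index a r < size r by rewrite index_mem.
by rewrite sz_r in H; lia.
Qed.

Lemma split_mem a : a \in s \/ a \in U.
Proof.
case: (boolP (a \in s)) => aS; [by left | right].
case: (Hcov a) => aA; first by rewrite aA in aS.
by rewrite /U !inE aS aA.
Qed.

Lemma v_in i : i <= l -> v i \in s.
Proof. move=> il; apply: mem_nth; apply: lt_pred il; lia. Qed.

Lemma u_in j : 1 <= j <= w - 2 -> u j \in U.
Proof. by move=> jw; rewrite -mem_enum; apply: mem_nth; rewrite sz_r; lia. Qed.

Lemma adj_xy : (ix.+1 == iy) || (iy.+1 == ix).
Proof.
rewrite /ix /iy -(ip_adj x Hs) ?index_mem // !nth_index //.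
exact: (clique_e HA).
Qed.

Lemma vt_A : v t \in A /\ v t.+1 \in A.
Proof.
have := adj_xy; case/orP => /eqP E; rewrite /t /v.
- have -> : minn ix iy = ix by lia.
  by rewrite E /ix /iy !nth_index.
- have -> : minn ix iy = iy by lia.
  by rewrite E /ix /iy !nth_index.
Qed.

Lemma t_l : t < l.
Proof.
have a : ix < size s by rewrite index_mem.
have b : iy < size s by rewrite index_mem.
have := adj_xy; rewrite /t /l => /orP [] /eqP; lia.
Qed.

Lemma main_WL : WL_graph e.
Proof.
have Hu : uniq s := ip_uniq Hs.
have hpos : 0 < size s by apply: ltnW.
exists l, w, t, v, u, (fun a b => (a \in s) && (b \in U) && e a b).
split; first by split; [rewrite /l; lia | exact: w2 | exact: t_l].
split.
  move=> i j il jl /eqP; rewrite /v nth_uniq //; [by move/eqP | exact: lt_pred hpos il | exact: lt_pred hpos jl].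
split.
  move=> i j iw jw /eqP; rewrite /u nth_uniq ?sz_r ?enum_uniq //; [move/eqP; lia|lia|lia].
split.
  move=> i j il jw E; have := u_in jw; by rewrite -E /U !inE v_in.
split.
  move=> a; case: (split_mem a) => [/in_s|/in_U] ?; [by left | by right].
split.
  move=> a b /andP[/andP[aS bU] _].
  have [i [il ->]] := in_s aS; have [j [jw ->]] := in_U bU.
  by exists i, j; do 2 split => //; left.
move=> a b; split.
- move=> eab.
  case: (split_mem a) => aS; case: (split_mem b) => bS.
  + have [i [il ai]] := in_s aS; have [j [jl bj]] := in_s bS.
    have := eab; rewrite ai bj /v ip_adj //; last 2 first.
      exact: lt_pred hpos il. exact: lt_pred hpos jl.
    case/orP => /eqP E; left.
    * by exists i; split; [by rewrite /l E | left; rewrite -E].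
    * by exists j; split; [by rewrite /l E | right; rewrite -E].
  + by right; right; left; rewrite aS bS eab.
  + by right; right; right; rewrite aS bS esym eab.
  + right; left; split.
      by move=> E; move: eab; rewrite E eirr.
    by split; right; right; apply: in_U.
- have [vtA vt1A] := vt_A.
  have inA : forall c, (c = v t \/ c = v t.+1 \/ exists j, 1 <= j <= w - 2 /\ c = u j) -> c \in A.
    move=> c [->|[->|[j [jw ->]]]] //.
    by have := u_in jw; rewrite /U inE => /andP[].
  move=> [[i [il [[-> ->]|[-> ->]]]] | [[ne [ha hb]] | [/andP[_ E]| /andP[_ E]]]].
  + by rewrite /v ip_adj ?eqxx //; first [exact: lt_pred3 il | exact: lt_pred2 il].
  + by rewrite /v ip_adj ?eqxx ?orbT //; first [exact: lt_pred3 il | exact: lt_pred2 il].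
  + apply: (clique_e HA); [exact: inA | exact: inA | by apply/eqP].
  + exact: E.
  + by rewrite esym.
Qed.

End C.

Section D.
Variables (T : finType) (e : rel T).

Lemma omega_le : omega e <= #|T|.
Proof. by apply/bigmax_leqP => A _; exact: max_card. Qed.

Lemma ell_attained : 0 < ell e -> exists s, induced_path e s /\ size s = (ell e).+1.
Proof.
pose P := fun k : 'I_#|T| => [exists s : k.+1.-tuple T, induced_path e s].
case: (posnP #|P|) => [P0|Ppos].
  have E0 : ell e = 0.
    rewrite /ell big_pred0 // => k; have := card0_eq P0 k.
    by rewrite [k \in P]unfold_in inE /=.
  by rewrite E0.
have [k kP E] := eq_bigmax_cond (fun k : 'I_#|T| => nat_of_ord k) Ppos.
move=> _; move: kP; rewrite unfold_in => /existsP [s Hs].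
exists s; split => //; rewrite size_tuple /ell.
by rewrite E.
Qed.

Lemma omega_attained : exists A, clique e A /\ #|A| = omega e.
Proof.
have Ppos : 0 < #|(fun A : {set T} => clique e A)|.
  apply/card_gt0P; exists set0; rewrite /clique unfold_in; apply/forallP => z.
  by rewrite inE.
have [A AP E] := eq_bigmax_cond (fun A : {set T} => #|A|) Ppos.
by exists A; split; [move: AP; rewrite unfold_in | rewrite /omega E].
Qed.

End D.

Theorem theorem3p3 (T : finType) (e : rel T)
  (esym : symmetric e) (eirr : irreflexive e)
  (econn : connected_graph e) :
  ell e = #|T| - omega e + 1 <-> WL_graph e.
Proof.
split.
- move=> Heq.
  have wn := omega_le e.
  have ellpos : 0 < ell e by lia.
  have [s [Hs ss]] := ell_attained ellpos.
  have [A [HA cA]] := omega_attained e.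
  have [c1 [c2 c3]] := count_bound Hs HA.
  have HI : #|[set z in s] :&: A| = 2 by lia.
  have HU : #|[set z in s] :|: A| = #|T| by lia.
  have Hcov : forall z, z \in s \/ z \in A.
    move=> z; have : z \in [set z in s] :|: A.
      have -> : [set z in s] :|: A = [set: T].
        by apply/eqP; rewrite eqEcard subsetT cardsT HU leqnn.
      by rewrite inE.
    by rewrite !inE => /orP.
  have Hl : 1 < size s by rewrite ss; lia.
  have : 1 < #|[set z in s] :&: A| by rewrite HI.
  case/card_gt1P => x [y [hx hy nxy]]; move: hx hy; rewrite !inE => /andP[xs xA] /andP[ys yA].
  by apply: (@main_WL T e s A x y).
- move=> [l [w [t [v [u [h [[H0 Hw Ht] [Hv [Hu [Hvu [Hcov [Hh HE]]]]]]]]]]]].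
  by apply: (@WL_eq T e l w t v u h).
Qed.
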